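(* Let $\theta\in V_\Lambda$. Every $M\in\overline{\mathcal P}(\theta)$ has a unique strict subobject $M_0$ such that $M_0\in\mathcal P(\theta)$ and $M/M_0\in\mathcal W(\theta)$. Moreover $\mathcal P(\theta)^\perp\cap\overline{\mathcal P}(\theta)=\mathcal W(\theta)$, and $\overline{\mathcal P}(\theta)$ is the smallest pseudo-torsion class containing $\mathcal P(\theta)\cup\mathcal W(\theta)$.
   Context: Let $\Lambda$ be a finite dimensional algebra over a field with $n$ isoclasses of simple modules, and $\mathrm{mod}\text-\Lambda$ the category of finitely generated right $\Lambda$-modules. Fix a torsion class $\mathcal G\subseteq\mathrm{mod}\text-\Lambda$ (closed under isomorphisms, extensions and quotients). For $B\in\mathcal G$, a subobject of $B$ is a submodule in $\mathcal G$; a subobject $A\subseteq B$ is strict if $A\cap B'\in\mathcal G$ for every subobject $B'$ of $B$; a strict quotient of $B$ is $B/A$ with $A$ a strict subobject. A short exact sequence in $\mathcal G$ is strict exact if its first term is a strict subobject of its middle term. A strict morphism is a homomorphism $f:A\to B$ with $A,B\in\mathcal G$ such that $\ker f\in\mathcal G$ is a strict subobject of $A$ and $\operatorname{im} f$ is a strict subobject of $B$. A pseudo-torsion class is a nonempty class $\mathcal P\subseteq\mathcal G$ closed under strict quotients and strict extensions. For $\mathcal X\subseteq\mathcal G$, $\mathcal X^\perp$ is the class of $Y\in\mathcal G$ such that every strict morphism $X\to Y$ with $X\in\mathcal X$ is zero. Let $V_\Lambda=\mathrm{Hom}_{\mathbb Z}(K_0\Lambda,\mathbb R)\cong\mathbb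 R^n$; $\theta(M)$ denotes $\theta$ applied to the dimension vector of $M$. $\mathcal P(\theta)$ = $\{0\}$ together with all nonzero $M\in\mathcal G$ with $\theta(M'')>0$ for every nonzero strict quotient $M''$ of $M$ (including $M$); $\overline{\mathcal P}(\theta)$ = all $M\in\mathcal G$ with $\theta(M'')\ge0$ for every strict quotient $M''$ of $M$. $\mathcal W(\theta)$ is the class of $X\in\mathcal G$ with $\theta(X)=0$ and $\theta(X')\le0$ for every strict subobject $X'$ of $X$. *)

(* Defs.v *)
From HB Require Import structures.
From mathcomp Require Import all_boot all_order all_algebra.
From mathcomp Require Import falgebra mxrepresentation.
From mathcomp Require Import reals.
Set Implicit Arguments. Set Strict Implicit. Unset Printing Implicit Defensive.
Import Order.TTheory GRing.Theory Num.Theory.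
Local Open Scope ring_scope.

Section Modules.
Variables (F : fieldType) (A : falgType F).

(* A finite-dimensional right A-module: F^d (row vectors) with right action
   v . a := v *m mact a. *)
Record rmodule := RModule { mdim : nat; mact : A -> 'M[F]_mdim }.

Definition is_rmod (M : rmodule) : Prop :=
  [/\ (forall a b, mact M (a + b) = mact M a + mact M b),
      (forall (c : F) a, mact M (c *: a) = c *: mact M a),
      mact M 1 = 1%:M &
      (forall a b, mact M (a * b) = mact M a *m mact M b)].

Definition is_submod (M : rmodule) (U : 'M[F]_(mdim M)) : Prop :=
  forall a, (U *m mact M a <= U)%MS.

Definition submod (M : rmodule) (U : 'M[F]_(mdim M)) : rmodule :=
  @RModule (\rank U) (fun a => in_submod U (@val_submod _ _ U _ 1%:M *m mact M a)).

Definition quotmod (M : rmodule) (U : 'M[F]_(mdim M)) : rmodule :=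
  @RModule _ (fun a => in_factmod U (@val_factmod _ _ U _ 1%:M *m mact M a)).

Definition is_hom (M N : rmodule) (f : 'M[F]_(mdim M, mdim N)) : Prop :=
  forall a, mact M a *m f = f *m mact N a.

Definition is_iso (M N : rmodule) : Prop :=
  exists f : 'M[F]_(mdim M, mdim N), [/\ is_hom M N f, row_free f & row_full f].

Definition zeromod : rmodule := @RModule 0 (fun _ => 0).

Definition mclass := rmodule -> Prop.

Definition torsion_class (G : mclass) : Prop :=
  [/\ (forall M, G M -> is_rmod M),
      G zeromod,
      (forall M N, G M -> is_iso M N -> G N),
      (forall M U, G M -> is_submod M U -> G (quotmod M U)) &
      (forall M U, is_rmod M -> is_submod M U ->
         G (submod M U) -> G (quotmod M U) -> G M)].

Variable G : mclass.

Definition subobj (B : rmodule) (U : 'M[F]_(mdim B)) : Prop :=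
  is_submod B U /\ G (submod B U).

Definition strict_subobj (B : rmodule) (U : 'M[F]_(mdim B)) : Prop :=
  subobj B U /\ (forall B' : 'M[F]_(mdim B), subobj B B' -> G (submod B (U :&: B')%MS)).

Definition strict_morph (M N : rmodule) (f : 'M[F]_(mdim M, mdim N)) : Prop :=
  [/\ G M, G N, is_hom M N f, strict_subobj M (kermx f) & strict_subobj N (<<f>>)%MS].

Definition perp (X : mclass) : mclass := fun Y =>
  G Y /\ forall M (f : 'M[F]_(mdim M, mdim Y)), X M -> strict_morph M Y f -> f = 0.

Definition pseudo_torsion (P : mclass) : Prop :=
  [/\ (exists M, P M),
      (forall M, P M -> G M),
      (forall M N, P M -> is_iso M N -> P N),
      (forall M U, P M -> strict_subobj M U -> P (quotmod M U)) &
      (forall M U, G M -> strict_subobj M U ->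
         P (submod M U) -> P (quotmod M U) -> P M)].

Variable R : realType.

(* theta in V_Lambda = Hom(K_0 Lambda, R), viewed as a function on modules:
   iso-invariant and additive on short exact sequences. *)
Definition additive_fun (theta : rmodule -> R) : Prop :=
  (forall M N, is_rmod M -> is_iso M N -> theta M = theta N) /\
  (forall M (U : 'M[F]_(mdim M)), is_rmod M -> is_submod M U ->
     theta M = theta (submod M U) + theta (quotmod M U)).

Variable theta : rmodule -> R.

Definition Ptheta : mclass := fun M =>
  G M /\ (mdim M = 0%N \/
    forall U : 'M[F]_(mdim M), strict_subobj M U ->
      mdim (quotmod M U) != 0%N -> 0 < theta (quotmod M U)).

Definition Pbar : mclass := fun M =>
  G M /\ forall U : 'M[F]_(mdim M), strict_subobj M U -> 0 <= theta (quotmod M U).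

Definition Wtheta : mclass := fun X =>
  [/\ G X, theta X = 0 &
      forall U : 'M[F]_(mdim X), strict_subobj X U -> theta (submod X U) <= 0].

End Modules.

Arguments Ptheta {F A} G {R} theta M.
Arguments Pbar {F A} G {R} theta M.
Arguments Wtheta {F A} G {R} theta X.
Arguments additive_fun {F A R} theta.

(* Main.v *)
Require Import Defs.
From HB Require Import structures.
From mathcomp Require Import all_boot all_order all_algebra.
From mathcomp Require Import falgebra mxrepresentation.
From mathcomp Require Import reals.
Set Implicit Arguments. Unset Strict Implicit. Unset Printing Implicit Defensive.
Import Order.TTheory GRing.Theory Num.Theory.
Local Open Scope ring_scope.
From Stdlib Require Import Classical.
Section MxAux.
Variable F : fieldType.

Lemma subB_sub m1 m2 n (X Y : 'M[F]_(m1, n)) (C : 'M[F]_(m2, n)) :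
  (X <= C)%MS -> (Y <= C)%MS -> (X - Y <= C)%MS.
Proof. by move=> hX hY; apply: addmx_sub => //; rewrite eqmx_opp. Qed.

Definition eqmod p n (U : 'M[F]_(p, n)) m (X Y : 'M[F]_(m, n)) := (X - Y <= U)%MS.

Variables (p n : nat) (U : 'M[F]_(p, n)).

Lemma eqmod_refl m (X : 'M[F]_(m, n)) : eqmod U X X.
Proof. by rewrite /eqmod subrr sub0mx. Qed.

Lemma eqmod_sym m (X Y : 'M[F]_(m, n)) : eqmod U X Y -> eqmod U Y X.
Proof. by rewrite /eqmod -opprB eqmx_opp. Qed.

Lemma eqmod_trans m (X Y Z : 'M[F]_(m, n)) :
  eqmod U X Y -> eqmod U Y Z -> eqmod U X Z.
Proof.
by move=> h1 h2; rewrite /eqmod -(subrK Y X) -addrA; apply: addmx_sub.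
Qed.

Lemma eqmodD m (X1 X2 Y1 Y2 : 'M[F]_(m, n)) :
  eqmod U X1 Y1 -> eqmod U X2 Y2 -> eqmod U (X1 + X2) (Y1 + Y2).
Proof.
move=> h1 h2; rewrite /eqmod opprD addrACA; exact: addmx_sub.
Qed.

Lemma eqmodZ m c (X Y : 'M[F]_(m, n)) :
  eqmod U X Y -> eqmod U (c *: X) (c *: Y).
Proof. by move=> h; rewrite /eqmod -scalerBr; apply: submx_trans (scalemx_sub _ _ ) h. Qed.

Lemma eqmodMl m k (C : 'M[F]_(k, m)) (X Y : 'M[F]_(m, n)) :
  eqmod U X Y -> eqmod U (C *m X) (C *m Y).
Proof. by move=> h; rewrite /eqmod -mulmxBr; apply: mulmx_sub. Qed.

Lemma eqmodE m (X Y : 'M[F]_(m, n)) : X = Y -> eqmod U X Y.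
Proof. by move=> ->; apply: eqmod_refl. Qed.

Lemma eqmod_sub m (X Y : 'M[F]_(m, n)) : eqmod U X Y -> (Y <= U)%MS -> (X <= U)%MS.
Proof. by move=> h hY; rewrite -(subrK Y X); apply: addmx_sub. Qed.

Lemma eqmodW p' (U' : 'M[F]_(p', n)) m (X Y : 'M[F]_(m, n)) :
  (U <= U')%MS -> eqmod U X Y -> eqmod U' X Y.
Proof. by move=> s h; apply: submx_trans h s. Qed.

Lemma eqmod_le p' (C : 'M[F]_(p', n)) m (X Y : 'M[F]_(m, n)) :
  eqmod U X Y -> (U <= C)%MS -> (Y <= C)%MS -> (X <= C)%MS.
Proof. by move=> h sU sY; rewrite -(subrK Y X); apply: addmx_sub => //; apply: submx_trans h sU. Qed.

Lemma eqms_refl m (X : 'M[F]_(m, n)) : (X == X)%MS.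
Proof. by rewrite submx_refl. Qed.

End MxAux.
Section Crit.
Variables (F : fieldType) (A : falgType F) (M : rmodule A).
Local Notation n := (mdim M).

Definition injm (U : 'M[F]_n) k (g : 'M[F]_(k, n)) :=
  forall m (x : 'M[F]_(m, k)), (x *m g <= U)%MS -> x = 0.

Definition crit (U V : 'M[F]_n) (N : rmodule A) (g : 'M[F]_(mdim N, n)) :=
  [/\ (g <= V)%MS, (V <= g + U)%MS, injm U g &
      forall a, eqmod U (mact N a *m g) (g *m mact M a)].
Arguments crit U V N g : clear implicits.

Lemma eqmodMr (U : 'M[F]_n) a m (X Y : 'M[F]_(m, n)) :
  is_submod M U -> eqmod U X Y -> eqmod U (X *m mact M a) (Y *m mact M a).
Proof.
by move=> sU h; rewrite /eqmod -mulmxBl; apply: submx_trans (submxMr _ h) (sU a).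
Qed.

Lemma injm_eq (U : 'M[F]_n) k (g : 'M[F]_(k, n)) m (X Y : 'M[F]_(m, k)) :
  injm U g -> eqmod U (X *m g) (Y *m g) -> X = Y.
Proof.
move=> ig h; apply/eqP; rewrite -subr_eq0; apply/eqP; apply: ig.
by rewrite mulmxBl.
Qed.

Lemma crit_le U W N g m (x : 'M[F]_(m, mdim N)) p (Y : 'M[F]_(p, mdim N)) :
  crit U W N g -> (x *m g <= Y *m g + U)%MS -> (x <= Y)%MS.
Proof.
case=> _ _ ig _ /sub_addsmxP [[u1 u2] /= E].
have -> : x = u1 *m Y; last exact: submxMl.
apply: (injm_eq ig); rewrite /eqmod E -mulmxA addrC addKr; exact: submxMl.
Qed.

Lemma decomp0 (U : 'M[F]_n) k (g : 'M[F]_(k, n)) m (X : 'M[F]_(m, n)) :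
  (X <= g + U)%MS -> exists c : 'M[F]_(m, k), eqmod U X (c *m g).
Proof.
move=> /sub_addsmxP [[u1 u2] /= E].
by exists u1; rewrite /eqmod E addrC addKr submxMl.
Qed.

Lemma crit_decomp U W N g m (X : 'M[F]_(m, n)) :
  crit U W N g -> (X <= W)%MS -> exists c : 'M[F]_(m, mdim N), eqmod U X (c *m g).
Proof.
case=> _ sW _ _ sX; have /sub_addsmxP [[u1 u2] /= E] := submx_trans sX sW.
by exists u1; rewrite /eqmod E addrC addKr submxMl.
Qed.

Lemma crit_img_submod U W N g (Y : 'M[F]_(mdim N)) :
  crit U W N g -> is_submod M U -> is_submod N Y -> is_submod M (Y *m g + U)%MS.
Proof.
case=> _ _ _ hact sU sY a.
rewrite addsmxMr addsmx_sub (submx_trans (sU a)) ?addsmxSr //.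
have h : eqmod U (Y *m g *m mact M a) (Y *m mact N a *m g).
  by rewrite -!mulmxA; apply: eqmodMl; apply: eqmod_sym.
have h2 : (Y *m mact N a *m g + U <= Y *m g + U)%MS.
  by apply: addsmxS => //; apply: submxMr.
rewrite andbT; apply: submx_trans h2.
by rewrite -(subrK (Y *m mact N a *m g) (Y *m g *m mact M a)) addrC; apply: addmx_sub_adds.
Qed.

Lemma crit_preimg_submod U W N g V (Y : 'M[F]_(mdim N)) :
  crit U W N g -> is_submod M U -> is_submod M V ->
  (Y *m g <= V)%MS -> (V <= Y *m g + U)%MS -> is_submod N Y.
Proof.
move=> c sU sV h1 h2 a; apply: (crit_le c).
case: c => _ _ _ hact.
have h : eqmod U (Y *m mact N a *m g) (Y *m g *m mact M a).
  by rewrite -!mulmxA; apply: eqmodMl.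
rewrite -(subrK (Y *m g *m mact M a) (Y *m mact N a *m g)) addrC.
apply: addmx_sub.
  apply: submx_trans (submxMr _ h1) _; apply: submx_trans (sV a) h2.
by apply: submx_trans h (addsmxSr _ _).
Qed.

Lemma submod_hom (N : rmodule A) (Y : 'M[F]_(mdim N)) a :
  is_submod N Y ->
  mact (submod N Y) a *m val_submod 1%:M = val_submod 1%:M *m mact N a.
Proof.
move=> sY; rewrite /= -val_submodE in_submodK //.
apply: submx_trans (submxMr _ (val_submodP _)) (sY a).
Qed.

Lemma crit_sub U W N g (Y : 'M[F]_(mdim N)) :
  crit U W N g -> is_submod N Y ->
  crit U (Y *m g + U)%MS (submod N Y) (val_submod 1%:M *m g).
Proof.
move=> c sY; case: (c) => g1 g2 ig hact; split.
- by apply: submx_trans (addsmxSl _ _); apply: submxMr; apply: val_submodP.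
- apply: addsmxS => //; apply: submxMr; rewrite val_submod1 //.
- move=> m x; rewrite mulmxA => /ig /eqP; rewrite -val_submodE val_submod_eq0.
  by move/eqP.
- move=> a; rewrite mulmxA submod_hom //.
  by have := eqmodMl (val_submod (1%:M : 'M_(\rank Y))) (hact a); rewrite !mulmxA.
Qed.

Lemma crit_quot U W N g (Y : 'M[F]_(mdim N)) :
  crit U W N g -> is_submod N Y ->
  crit (Y *m g + U)%MS W (quotmod N Y) (val_factmod 1%:M *m g).
Proof.
move=> c sY; case: (c) => g1 g2 ig hact; split.
- exact: submx_trans (submxMl _ _) g1.
- apply: submx_trans g2 _; rewrite addsmx_sub addsmxA addsmxSr andbT.
  rewrite -{1}[g]mul1mx -{1}(add_sub_fact_mod Y 1%:M) mulmxDl addrC.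
  apply: submx_trans (addsmxSl _ U).
  apply: addmx_sub_adds; last by apply: submxMr; apply: val_submodP.
  by rewrite val_factmodE -mulmxA submxMl.
- move=> m x; rewrite mulmxA => /(crit_le c) h.
  have : (x *m val_factmod 1%:M <= Y :&: Y^C)%MS.
    by rewrite sub_capmx h -val_factmodE val_factmodP.
  rewrite capmx_compl submx0 -val_factmodE val_factmod_eq0; by move/eqP.
- move=> a; rewrite /= mulmxA -val_factmodE.
  set Z := val_factmod 1%:M *m mact N a.
  have e1 : eqmod (Y *m g) (val_factmod (in_factmod Y Z) *m g) (Z *m g).
    rewrite /eqmod -mulmxBl; apply: submxMr.
    have E := add_sub_fact_mod Y Z.
    rewrite -[X in (_ - X)%R]E opprD addrCA subrr addr0 eqmx_opp.
    exact: val_submodP.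
  have e2 : eqmod U (Z *m g) (val_factmod 1%:M *m g *m mact M a).
    by have := eqmodMl (val_factmod (1%:M : 'M_(\rank (cokermx Y)))) (hact a); rewrite /Z !mulmxA.
  rewrite /eqmod -(subrK (Z *m g) (val_factmod _ *m g)) -addrA.
  exact: addmx_sub_adds.
Qed.

End Crit.
Arguments crit {F A M} U V N g.
Section Crit2.
Variables (F : fieldType) (A : falgType F) (M : rmodule A).
Local Notation n := (mdim M).

Lemma inv_iso (N1 N2 : rmodule A) (h : 'M[F]_(mdim N1, mdim N2)) h' :
  h *m h' = 1%:M -> h' *m h = 1%:M -> row_free h /\ row_full h.
Proof.
move=> e1 e2; split.
  rewrite /row_free eqn_leq rank_leq_row /=.
  by rewrite -{1}(mxrank1 F (mdim N1)) -e1 mxrankM_maxl.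
rewrite /row_full eqn_leq rank_leq_col /=.
by rewrite -{1}(mxrank1 F (mdim N2)) -e2 mxrankM_maxr.
Qed.

Lemma crit_iso (U V : 'M[F]_n) N1 N2 g1 g2 :
  crit U V N1 g1 -> crit U V N2 g2 -> is_submod M U -> is_iso N1 N2.
Proof.
move=> c1 c2 sU; case: (c1) => s1 _ i1 a1; case: (c2) => s2 _ i2 a2.
have [h e1] := crit_decomp c2 s1; have [h' e2] := crit_decomp c1 s2.
have hh : h *m h' = 1%:M.
  apply: (injm_eq i1); rewrite mul1mx -mulmxA.
  exact: eqmod_trans (eqmodMl h (eqmod_sym e2)) (eqmod_sym e1).
have hh' : h' *m h = 1%:M.
  apply: (injm_eq i2); rewrite mul1mx -mulmxA.
  exact: eqmod_trans (eqmodMl h' (eqmod_sym e1)) (eqmod_sym e2).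
exists h; have [rf rF] := inv_iso hh hh'; split => // a.
apply: (injm_eq i2); rewrite -!mulmxA.
apply: eqmod_trans (eqmodMl _ (eqmod_sym e1)) _.
apply: eqmod_trans (a1 a) _.
apply: eqmod_trans (eqmodMr a sU e1) _.
by have := eqmodMl h (eqmod_sym (a2 a)); rewrite mulmxA.
Qed.

Lemma crit_rmod (U V : 'M[F]_n) N g :
  is_rmod M -> is_submod M U -> crit U V N g -> is_rmod N.
Proof.
move=> [rD rZ r1 rM] sU [_ _ ig ha]; split.
- move=> a b; apply: (injm_eq ig); rewrite mulmxDl.
  apply: eqmod_trans (ha _) _; rewrite rD mulmxDr.
  by apply: eqmodD; apply: eqmod_sym.
- move=> c a; apply: (injm_eq ig); rewrite -scalemxAl.
  apply: eqmod_trans (ha _) _; rewrite rZ -scalemxAr.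
  by apply: eqmodZ; apply: eqmod_sym.
- apply: (injm_eq ig); apply: eqmod_trans (ha _) _.
  by rewrite r1 mulmx1 mul1mx; apply: eqmod_refl.
- move=> a b; apply: (injm_eq ig); apply: eqmod_trans (ha _) _.
  rewrite rM.
  have e1 := eqmodMr b sU (eqmod_sym (ha a)).
  have e2 := eqmodMl (mact N a) (eqmod_sym (ha b)).
  rewrite !mulmxA in e1 e2 *; exact: eqmod_trans e1 e2.
Qed.

Lemma crit_eq (U V U' V' : 'M[F]_n) N g :
  (U == U')%MS -> (V == V')%MS -> crit U V N g -> crit U' V' N g.
Proof.
move=> /eqmxP eU /eqmxP eV [c1 c2 c3 c4]; split.
- by rewrite -eV.
- by rewrite -eV; apply: submx_trans c2 _; apply: addsmxS; rewrite ?eU.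
- by move=> m x; rewrite -eU; apply: c3.
- by move=> a; rewrite /eqmod -eU; apply: c4.
Qed.

Lemma crit0 : crit 0 1%:M M 1%:M.
Proof.
split.
- exact: submx_refl.
- exact: addsmxSl.
- by move=> m x; rewrite mulmx1 submx0 => /eqP.
- by move=> a; rewrite mulmx1 mul1mx; apply: eqmod_refl.
Qed.

Lemma crit_dim0 (U W : 'M[F]_n) N g : crit U W N g -> (mdim N == 0%N) = (W <= U)%MS.
Proof.
case=> c1 c2 c3 _; apply/eqP/idP.
  move=> e; apply: submx_trans c2 _; rewrite addsmx_sub submx_refl andbT.
  move: g {c1 c3}; rewrite e => g; by rewrite (flatmx0 g) sub0mx.
move=> sWU; have := c3 _ 1%:M; rewrite mul1mx => /(_ (submx_trans c1 sWU)) e.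
by have := mxrank1 F (mdim N); rewrite e mxrank0.
Qed.

Lemma crit_cap (U W : 'M[F]_n) N g (Y Z : 'M[F]_(mdim N)) :
  crit U W N g ->
  ((Y :&: Z) *m g + U == (Y *m g + U) :&: (Z *m g + U))%MS.
Proof.
move=> c0; apply/andP; split.
  by rewrite sub_capmx; apply/andP; split; apply: addsmxS => //; apply: submxMr;
    rewrite ?capmxSl ?capmxSr.
set C := ((Y *m g + U) :&: (Z *m g + U))%MS.
have sC : (C <= g + U)%MS.
  apply: submx_trans (capmxSl _ _) _; apply: addsmxS => //; exact: submxMl.
have [c e] := decomp0 sC.
have hY : (c <= Y)%MS.
  apply: (crit_le c0); apply: eqmod_sub (eqmodW (addsmxSr _ _) (eqmod_sym e)) _.
  exact: capmxSl.
have hZ : (c <= Z)%MS.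
  apply: (crit_le c0); apply: eqmod_sub (eqmodW (addsmxSr _ _) (eqmod_sym e)) _.
  exact: capmxSr.
apply: eqmod_sub (eqmodW (addsmxSr _ _) e) _.
apply: submx_trans (addsmxSl _ _); apply: submxMr; by rewrite sub_capmx hY hZ.
Qed.

End Crit2.
Section Crit3.
Variables (F : fieldType) (A : falgType F) (M : rmodule A).
Local Notation n := (mdim M).

Lemma crit_iso2 (V Y : 'M[F]_n) N g : crit (V :&: Y)%MS Y N g -> crit V (Y + V)%MS N g.
Proof.
case=> c1 c2 c3 c4; split.
- exact: submx_trans c1 (addsmxSl _ _).
- rewrite addsmx_sub addsmxSr andbT; apply: submx_trans c2 _.
  by apply: addsmxS => //; apply: capmxSl.
- move=> m x h; apply: c3; rewrite sub_capmx h /=.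
  exact: submx_trans (submxMl _ _) c1.
- by move=> a; apply: eqmodW (c4 a); apply: capmxSl.
Qed.

Lemma submod0 : is_submod M (0 : 'M[F]_n).
Proof. by move=> a; rewrite mul0mx sub0mx. Qed.

Lemma submod1 : is_submod M (1%:M : 'M[F]_n).
Proof. by move=> a; rewrite submx1. Qed.

Definition cq (U V : 'M[F]_n) := quotmod (submod M V) (<<in_submod V U>>%MS).

Definition cqg (U V : 'M[F]_n) : 'M[F]_(mdim (cq U V), n) :=
  val_factmod 1%:M *m (val_submod 1%:M *m 1%:M).

Lemma crit_cq (U V : 'M[F]_n) :
  is_submod M U -> is_submod M V -> (U <= V)%MS -> crit U V (cq U V) (cqg U V).
Proof.
move=> sU sV sUV.
have c1 := crit_sub (crit0 M) sV.
have eY : (<<in_submod V U>>%MS *m (val_submod 1%:M *m 1%:M) :=: U)%MS.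
  rewrite mulmx1; apply: eqmx_trans (eqmxMr _ (genmxE _)) _.
  by rewrite -val_submodE in_submodK.
have sY : is_submod (submod M V) (<<in_submod V U>>%MS).
  apply: (crit_preimg_submod c1 (submod0) sU).
    by move/eqmxP: eY => /andP [].
  by apply: submx_trans (addsmxSl _ _); move/eqmxP: eY => /andP [].
have c2 := crit_quot c1 sY.
apply: crit_eq c2; apply/eqmxP.
  exact: (eqmx_trans (@addsmx0 _ _ _ _ _) eY).
by rewrite mulmx1; apply: (@addsmx0 _ _ _ _ _).
Qed.

Lemma submod_cap (N : rmodule A) (X Y : 'M[F]_(mdim N)) :
  is_submod N X -> is_submod N Y -> is_submod N (X :&: Y)%MS.
Proof.
move=> sX sY a; rewrite sub_capmx; apply/andP; split.
  exact: submx_trans (submxMr _ (capmxSl _ _)) (sX a).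
exact: submx_trans (submxMr _ (capmxSr _ _)) (sY a).
Qed.

End Crit3.
Set Default Proof Using "All".
Section Layer.
Variables (F : fieldType) (A : falgType F) (G : mclass A).
Hypothesis tG : torsion_class G.
Variables (R : realType) (theta : rmodule A -> R).
Hypothesis aT : additive_fun theta.

Lemma mx0eq k (X Y : 'M[F]_(0, k)) : X = Y.
Proof. by rewrite (flatmx0 X) (flatmx0 Y). Qed.

Lemma dim0_iso (N : rmodule A) : mdim N = 0%N -> is_iso (zeromod A) N.
Proof.
move=> e; exists 0; split.
- by move=> a; apply: mx0eq.
- by rewrite /row_free /= mxrank0.
- by rewrite /row_full mxrank0 e.
Qed.

Lemma rmod_zero : is_rmod (zeromod A).
Proof. by split => *; apply: mx0eq. Qed.

Lemma G_dim0 (N : rmodule A) : mdim N = 0%N -> G N.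
Proof.
case: tG => _ G0 Giso _ _ e; exact: Giso _ _ G0 (dim0_iso e).
Qed.

Lemma theta_zero : theta (zeromod A) = 0.
Proof.
case: aT => ti ta.
have := ta (zeromod A) 0 rmod_zero (submod0 _).
rewrite -(ti _ (submod (zeromod A) 0) rmod_zero) ?dim0_iso /= ?mxrank0 //.
rewrite -(ti _ (quotmod (zeromod A) 0) rmod_zero); last first.
  by apply: dim0_iso; apply/eqP; rewrite -leqn0 /= rank_leq_col.
by move/(congr1 (fun x => x - theta (zeromod A))); rewrite subrr addrK => <-.
by apply: dim0_iso; rewrite /= mxrank0.
Qed.

Lemma theta_dim0 (N : rmodule A) : mdim N = 0%N -> theta N = 0.
Proof.
move=> e; case: aT => ti _; rewrite -(ti _ N rmod_zero (dim0_iso e)); exact: theta_zero.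
Qed.

Lemma Giso (N1 N2 : rmodule A) : G N1 -> is_iso N1 N2 -> G N2.
Proof. by case: tG => _ _ h _ _; apply: h. Qed.

Lemma G_rmod (N : rmodule A) : G N -> is_rmod N.
Proof. by case: tG => h _ _ _ _; apply: h. Qed.

Variable M : rmodule A.
Hypothesis rM : is_rmod M.
Local Notation n := (mdim M).
Local Notation sm := (is_submod M).

Definition GS (U V : 'M[F]_n) := G (cq U V).
Definition TS (U V : 'M[F]_n) := theta (cq U V).

Lemma T_G (U W : 'M[F]_n) N g : sm U -> sm W -> (U <= W)%MS ->
  crit U W N g -> (G N <-> GS U W).
Proof.
move=> sU sW sUW c; have c' := crit_cq sU sW sUW; split => h.
  exact: Giso h (crit_iso c c' sU).
exact: Giso h (crit_iso c' c sU).
Qed.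

Lemma T_theta (U W : 'M[F]_n) N g : sm U -> sm W -> (U <= W)%MS ->
  crit U W N g -> theta N = TS U W.
Proof.
move=> sU sW sUW c; have c' := crit_cq sU sW sUW.
case: aT => ti _; apply: ti; [exact: crit_rmod rM sU c | exact: crit_iso c c' sU].
Qed.

Lemma GS_eq (U V U' V' : 'M[F]_n) : sm U -> sm V -> sm U' -> sm V' -> (U <= V)%MS ->
  (U == U')%MS -> (V == V')%MS -> (GS U V <-> GS U' V') /\ TS U V = TS U' V'.
Proof.
move=> sU sV sU' sV' sUV eU eV.
have c := crit_eq eU eV (crit_cq sU sV sUV).
have sUV' : (U' <= V')%MS.
  by move/eqmxP: eU => <-; move/eqmxP: eV => <-.
split; last exact: (T_theta sU' sV' sUV' c).
exact: (T_G sU' sV' sUV' c).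
Qed.

Lemma find_Y (U W V : 'M[F]_n) N g : sm U -> sm V -> (U <= V)%MS -> (V <= W)%MS ->
  crit U W N g -> exists Y : 'M[F]_(mdim N), is_submod N Y /\ (Y *m g + U == V)%MS.
Proof.
move=> sU sV sUV sVW c.
have [x e] := crit_decomp c sVW.
have eg : (<<x>>%MS *m g :=: x *m g)%MS by apply: eqmxMr; apply: genmxE.
have h1 : (<<x>>%MS *m g <= V)%MS.
  rewrite eg; exact: eqmod_le (eqmod_sym e) sUV (submx_refl V).
have h2 : (V <= <<x>>%MS *m g + U)%MS.
  apply: submx_trans (_ : (x *m g + U <= _)%MS); last by apply: addsmxS; rewrite ?eg.
  by rewrite -(subrK (x *m g) V) addrC; apply: addmx_sub_adds.
exists <<x>>%MS; split; first exact: crit_preimg_submod c sU sV h1 h2.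
by rewrite h2 addsmx_sub h1 sUV.
Qed.

Lemma GS_quot (U V W : 'M[F]_n) : sm U -> sm V -> sm W -> (U <= V)%MS -> (V <= W)%MS ->
  GS U W -> GS V W.
Proof.
move=> sU sV sW sUV sVW h.
have sUW := submx_trans sUV sVW.
have c := crit_cq sU sW sUW.
have [Y [sY eY]] := find_Y sU sV sUV sVW c.
have c2 := crit_eq eY (eqms_refl W) (crit_quot c sY).
apply/(T_G sV sW sVW c2).
by case: tG => _ _ _ hq _; apply: hq.
Qed.

Lemma GS_ext (U V W : 'M[F]_n) : sm U -> sm V -> sm W -> (U <= V)%MS -> (V <= W)%MS ->
  GS U V -> GS V W -> GS U W.
Proof.
move=> sU sV sW sUV sVW h1 h2.
have sUW := submx_trans sUV sVW.
have c := crit_cq sU sW sUW.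
have [Y [sY eY]] := find_Y sU sV sUV sVW c.
have c2 := crit_eq eY (eqms_refl W) (crit_quot c sY).
have c1 := crit_eq (eqms_refl U) eY (crit_sub c sY).
have r := crit_rmod rM sU c.
case: tG => _ _ _ _ he; apply: he r sY _ _.
  exact/(T_G sU sV sUV c1).
exact/(T_G sV sW sVW c2).
Qed.

Lemma TS_add (U V W : 'M[F]_n) : sm U -> sm V -> sm W -> (U <= V)%MS -> (V <= W)%MS ->
  TS U W = TS U V + TS V W.
Proof.
move=> sU sV sW sUV sVW.
have sUW := submx_trans sUV sVW.
have c := crit_cq sU sW sUW.
have [Y [sY eY]] := find_Y sU sV sUV sVW c.
have c2 := crit_eq eY (eqms_refl W) (crit_quot c sY).
have c1 := crit_eq (eqms_refl U) eY (crit_sub c sY).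
have r := crit_rmod rM sU c.
case: aT => _ ta; rewrite /TS (ta _ Y r sY).
by rewrite (T_theta sU sV sUV c1) (T_theta sV sW sVW c2).
Qed.

Lemma GS_0 (U W : 'M[F]_n) : sm U -> sm W -> (U <= W)%MS -> (W <= U)%MS ->
  GS U W /\ TS U W = 0.
Proof.
move=> sU sW sUW sWU; have c := crit_cq sU sW sUW.
have e : mdim (cq U W) = 0%N by apply/eqP; rewrite (crit_dim0 c).
by split; [apply: G_dim0 | apply: theta_dim0].
Qed.

Lemma sm_cap (X Y : 'M[F]_n) : sm X -> sm Y -> sm (X :&: Y)%MS.
Proof.
move=> sX sY a; rewrite sub_capmx; apply/andP; split.
  exact: submx_trans (submxMr _ (capmxSl _ _)) (sX a).
exact: submx_trans (submxMr _ (capmxSr _ _)) (sY a).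
Qed.

Lemma sm_add (X Y : 'M[F]_n) : sm X -> sm Y -> sm (X + Y)%MS.
Proof. by move=> sX sY a; rewrite addsmxMr; apply: addsmxS. Qed.

Lemma GS_iso2 (V Y : 'M[F]_n) : sm V -> sm Y ->
  (GS (V :&: Y)%MS Y <-> GS V (Y + V)%MS) /\ TS (V :&: Y)%MS Y = TS V (Y + V)%MS.
Proof.
move=> sV sY.
have sVY := sm_cap sV sY.
have c := crit_cq sVY sY (capmxSr _ _).
have c2 := crit_iso2 c.
have sYV := sm_add sY sV.
have le : (V <= Y + V)%MS by apply: addsmxSr.
split; last by rewrite /TS (T_theta sV sYV le c2).
exact: (T_G sV sYV le c2).
Qed.

Lemma GS_eqr (U V V' : 'M[F]_n) : sm U -> sm V -> sm V' -> (U <= V)%MS ->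
  (V == V')%MS -> GS U V -> GS U V'.
Proof.
move=> sU sV sV' sUV e; exact: (GS_eq sU sV sU sV' sUV (eqms_refl U) e).1.1.
Qed.

Lemma TS_eqr (U V V' : 'M[F]_n) : sm U -> sm V -> sm V' -> (U <= V)%MS ->
  (V == V')%MS -> TS U V = TS U V'.
Proof.
move=> sU sV sV' sUV e; exact: (GS_eq sU sV sU sV' sUV (eqms_refl U) e).2.
Qed.

Lemma TS_eql (U U' V : 'M[F]_n) : sm U -> sm U' -> sm V -> (U <= V)%MS ->
  (U == U')%MS -> TS U V = TS U' V.
Proof.
move=> sU sU' sV sUV e; exact: (GS_eq sU sV sU' sV sUV e (eqms_refl V)).2.
Qed.

Definition SS (U W V : 'M[F]_n) := [/\ sm V, (U <= V)%MS, (V <= W)%MS, GS U V &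
  forall B, sm B -> (U <= B)%MS -> (B <= W)%MS -> GS U B -> GS U (V :&: B)%MS].

Lemma SS_top (U W : 'M[F]_n) : sm U -> sm W -> (U <= W)%MS -> GS U W -> SS U W W.
Proof.
move=> sU sW sUW h; split => // B sB sUB sBW hB.
apply: (GS_eqr sU sB (sm_cap sW sB) sUB _ hB).
by rewrite capmxSr sub_capmx sBW submx_refl.
Qed.

Lemma SS_bot (U W : 'M[F]_n) : sm U -> sm W -> (U <= W)%MS -> SS U W U.
Proof.
move=> sU sW sUW; have [h0 _] := GS_0 sU sU (submx_refl U) (submx_refl U).
split => // B sB sUB sBW hB.
apply: (GS_eqr sU sU (sm_cap sU sB) (submx_refl U) _ h0).
by rewrite capmxSl sub_capmx sUB submx_refl.
Qed.

Lemma capmx_le (X V B : 'M[F]_n) : (X <= V)%MS -> (X :&: (V :&: B) == X :&: B)%MS.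
Proof.
move=> sXV; rewrite capmxS ?submx_refl ?capmxSr //=.
by rewrite !sub_capmx capmxSl capmxSr (submx_trans (capmxSl _ _) sXV).
Qed.

Lemma SS_trans (U W V X : 'M[F]_n) : sm U -> SS U W V -> SS U V X -> SS U W X.
Proof.
move=> sU [sV sUV sVW hV stV] [sX sUX sXV hX stX].
split => //; first exact: submx_trans sXV sVW.
move=> B sB sUB sBW hB.
have sVB := sm_cap sV sB.
have h1 := stV B sB sUB sBW hB.
have sUVB : (U <= V :&: B)%MS by rewrite sub_capmx sUV sUB.
have h2 := stX _ sVB sUVB (capmxSl _ _) h1.
apply: (GS_eqr sU (sm_cap sX sVB) (sm_cap sX sB) _ (capmx_le _ sXV) h2).
by rewrite sub_capmx sUX.
Qed.

Lemma SS_restr (U W V X : 'M[F]_n) : SS U W X -> sm V -> (X <= V)%MS -> (V <= W)%MS ->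
  SS U V X.
Proof.
move=> [sX sUX sXW hX stX] sV sXV sVW; split => // B sB sUB sBV hB.
exact: stX B sB sUB (submx_trans sBV sVW) hB.
Qed.

Lemma SS_cap (U W X Y : 'M[F]_n) : SS U W X -> SS U W Y -> SS U W (X :&: Y)%MS.
Proof.
move=> [sX sUX sXW hX stX] [sY sUY sYW hY stY].
split.
- exact: sm_cap.
- by rewrite sub_capmx sUX.
- exact: submx_trans (capmxSl _ _) sXW.
- exact: stX.
move=> B sB sUB sBW hB.
rewrite -capmxA; apply: stX.
- exact: sm_cap.
- by rewrite sub_capmx sUY.
- exact: submx_trans (capmxSr _ _) sBW.
exact: stY.
Qed.

Lemma SS_quotL (U W V X : 'M[F]_n) : sm U -> sm W -> SS U W X -> sm V ->
  (U <= V)%MS -> (V <= X)%MS -> GS U V -> SS V W X.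
Proof.
move=> sU sW [sX sUX sXW hX stX] sV sUV sVX hV.
split => //; first exact: GS_quot sU sV sX sUV sVX hX.
move=> B sB sVB sBW hB.
have sUB := submx_trans sUV sVB.
have hUB := GS_ext sU sV sB sUV sVB hV hB.
have h := stX B sB sUB sBW hUB.
have sXB := sm_cap sX sB.
apply: (GS_quot sU sV sXB sUV _ h); by rewrite sub_capmx sVX.
Qed.

Lemma SS_quotR (U W V X : 'M[F]_n) : sm U -> sm W -> SS U W V -> SS V W X -> SS U W X.
Proof.
move=> sU sW [sV sUV sVW hV stV] [sX sVX sXW hVX stX].
have sUX := submx_trans sUV sVX.
split => //; first exact: GS_ext sU sV sX sUV sVX hV hVX.
move=> B sB sUB sBW hB.
have sVB := sm_cap sV sB.
have sXB := sm_cap sX sB.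
have h1 := stV B sB sUB sBW hB.
have sUVB : (U <= V :&: B)%MS by rewrite sub_capmx sUV.
have h2 : GS (V :&: B)%MS B := GS_quot sU sVB sB sUVB (capmxSr _ _) hB.
have [i2 _] := GS_iso2 sV sB.
have h3 := i2.1 h2.
have sBV := sm_add sB sV.
have sBVW : (B + V <= W)%MS by rewrite addsmx_sub sBW.
have h4 := stX _ sBV (addsmxSr _ _) sBVW h3.
have e : (X :&: (B + V) == (X :&: B) + V)%MS.
  apply/andP; split.
    rewrite capmxC [(B + V)%MS]addsmxC -(matrix_modl B sVX).
    rewrite addsmx_sub addsmxSr /= capmxC; exact: addsmxSl.
  rewrite addsmx_sub !sub_capmx capmxSl sVX addsmxSr /= andbT.
  exact: submx_trans (capmxSr _ _) (addsmxSl _ _).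
have sXBV := sm_add sXB sV.
have le5 : (V <= X :&: (B + V))%MS by rewrite sub_capmx sVX addsmxSr.
have h5 := GS_eqr sV (sm_cap sX sBV) sXBV le5 e h4.
have [i5 _] := GS_iso2 sV sXB.
have h6 := i5.2 h5.
have sVXB := sm_cap sV sXB.
have e2 : (V :&: B == V :&: (X :&: B))%MS.
  by have := capmx_le B sVX; rewrite andbC.
have h7 := GS_eqr sU sVB sVXB sUVB e2 h1.
apply: (GS_ext sU sVXB sXB _ (capmxSr _ _) h7 h6).
by rewrite !sub_capmx sUV sUX.
Qed.

Lemma SS_sum (U W V X : 'M[F]_n) : sm U -> sm W -> SS U W V -> SS U W X ->
  SS V W (V + X)%MS.
Proof.
move=> sU sW [sV sUV sVW hV stV] [sX sUX sXW hX stX].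
have sVX := sm_cap sV sX.
have sUVX : (U <= V :&: X)%MS by rewrite sub_capmx sUV.
split.
- exact: sm_add.
- exact: addsmxSl.
- by rewrite addsmx_sub sVW.
- have h1 := GS_quot sU sVX sX sUVX (capmxSr _ _) hX.
  have [i _] := GS_iso2 sV sX; rewrite addsmxC; exact: i.1 h1.
move=> B sB sVB sBW hB.
have sUB := submx_trans sUV sVB.
have hUB := GS_ext sU sV sB sUV sVB hV hB.
have h1 := stX B sB sUB sBW hUB.
have sXB := sm_cap sX sB.
have sVXB := sm_cap sV sXB.
have le2 : (U <= V :&: (X :&: B))%MS by rewrite !sub_capmx sUV sUX.
have h2 := GS_quot sU sVXB sXB le2 (capmxSr _ _) h1.
have [i _] := GS_iso2 sV sXB.
have h3 := i.1 h2.
rewrite addsmxC in h3.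
apply: GS_eqr sV (sm_add sV sXB) (sm_cap (sm_add sV sX) sB) (addsmxSl _ _) _ h3.
have mm := matrix_modl X sVB. by apply/eqmxP.
Qed.
Definition PbarS (U W : 'M[F]_n) :=
  GS U W /\ forall V, SS U W V -> 0 <= TS V W.
Definition PS (U W : 'M[F]_n) :=
  GS U W /\ ((W <= U)%MS \/ forall V, SS U W V -> ~~ (W <= V)%MS -> 0 < TS V W).
Definition WS (U W : 'M[F]_n) :=
  [/\ GS U W, TS U W = 0 & forall V, SS U W V -> TS U V <= 0].

Lemma PS_Pbar (U W : 'M[F]_n) : sm U -> sm W -> PS U W -> PbarS U W.
Proof.
move=> sU sW [h1 h2]; split => // V [sV sUV sVW hV stV].
have [sWV | nWV] := boolP (W <= V)%MS.
  by rewrite (GS_0 sV sW sVW sWV).2.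
case: h2 => [sWU | h2]; last by apply/ltW/h2.
by move: nWV; rewrite (submx_trans sWU sUV).
Qed.

Lemma WS_Pbar (U W : 'M[F]_n) : sm U -> sm W -> WS U W -> PbarS U W.
Proof.
move=> sU sW [h1 h2 h3]; split => // V sSV.
have := h3 V sSV; case: sSV => sV sUV sVW _ _.
rewrite (TS_add sU sV sW sUV sVW) in h2.
move=> h; have -> : TS V W = - TS U V by apply/eqP; rewrite -subr_eq0 opprK addrC h2.
by rewrite oppr_ge0.
Qed.

Lemma Pbar_quot (U W V : 'M[F]_n) : sm U -> sm W -> PbarS U W -> SS U W V -> PbarS V W.
Proof.
move=> sU sW [h1 h2] sSV; have sSV' := sSV; case: sSV' => sV sUV sVW _ _.
split; first exact: GS_quot sU sV sW sUV sVW h1.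
move=> X sSX; apply: h2; exact: SS_quotR sU sW sSV sSX.
Qed.

Lemma Pbar_ext (U W V : 'M[F]_n) : sm U -> sm W -> GS U W -> SS U W V ->
  PbarS U V -> PbarS V W -> PbarS U W.
Proof.
move=> sU sW hUW sSV [_ p1] [_ p2]; split => // X sSX.
have sSV' := sSV; case: sSV' => sV sUV sVW _ _.
have sSX' := sSX; case: sSX' => sX sUX sXW _ _.
have sVX := sm_add sV sX.
have le1 : (X <= V + X)%MS by apply: addsmxSr.
have le2 : (V + X <= W)%MS by rewrite addsmx_sub sVW.
rewrite (TS_add sX sVX sW le1 le2).
have [_ e] := GS_iso2 sX sV.
rewrite -e; apply: addr_ge0.
  apply: p1; apply: (SS_restr (SS_cap sSX sSV) sV (capmxSr _ _) sVW).
exact: p2 (SS_sum sU sW sSV sSX).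
Qed.

Lemma min_exists (U W : 'M[F]_n) k : forall V : 'M[F]_n, (\rank V <= k)%N ->
  SS U W V -> TS V W = 0 ->
  exists V0, [/\ SS U W V0, TS V0 W = 0 &
    forall X, SS U W X -> (X <= V0)%MS -> TS X W = 0 -> (V0 <= X)%MS].
Proof.
elim: k => [|k IH] V rV sSV tV.
  exists V; split => // X _ sXV _.
  have : \rank V = 0%N by apply/eqP; rewrite -leqn0.
  by move/eqP; rewrite mxrank_eq0 => /eqP ->; apply: sub0mx.
case: (classic (exists X, [/\ SS U W X, (X <= V)%MS, TS X W = 0 & ~~ (V <= X)%MS])).
  case=> X [sSX sXV tX nVX]; apply: (IH X) => //.
  have lt : (\rank X < \rank V)%N by rewrite (ltn_leqif (mxrank_leqif_sup sXV)).
  by rewrite -ltnS; apply: leq_trans lt rV.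
move=> nex; exists V; split => // X sSX sXV tX.
apply/negP => nVX; apply: nex; exists X; split => //; exact/negP.
Qed.

Lemma exist_dec (U W : 'M[F]_n) : sm U -> sm W -> (U <= W)%MS -> PbarS U W ->
  exists V, [/\ SS U W V, PS U V & WS V W].
Proof.
move=> sU sW sUW [hUW p].
have [V0 [sS0 t0 mn]] := @min_exists U W (\rank W) W (leqnn _) (SS_top sU sW sUW hUW)
  (GS_0 sW sW (submx_refl W) (submx_refl W)).2.
have sS0' := sS0; case: sS0' => sV0 sUV0 sV0W hV0 _.
exists V0; split => //.
- split => //; right => X sSX nV0X.
  have sSXW := SS_trans sU sS0 sSX.
  have := p X sSXW; case: sSX => sX sUX sXV0 _ _.
  rewrite (TS_add sX sV0 sW sXV0 sV0W) t0 addr0 le0r => /orP [/eqP e|//].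
  have := mn X sSXW sXV0; rewrite (TS_add sX sV0 sW sXV0 sV0W) t0 e addr0 => /(_ erefl).
  by move=> h; move: nV0X; rewrite h.
- split => //; first exact: GS_quot sU sV0 sW sUV0 sV0W hUW.
  move=> X sSX; have sSXW := SS_quotR sU sW sS0 sSX.
  have := p X sSXW; case: sSX => sX sV0X sXW _ _.
  move: t0; rewrite (TS_add sV0 sX sW sV0X sXW) => e.
  have -> : TS V0 X = - TS X W by apply/eqP; rewrite -subr_eq0 opprK e.
  by rewrite oppr_le0.
Qed.

Lemma uniq_le (U W V1 V2 : 'M[F]_n) : sm U -> sm W ->
  SS U W V1 -> PS U V1 -> SS U W V2 -> WS V2 W -> (V1 <= V2)%MS.
Proof.
move=> sU sW sS1 [_ p1] sS2 [_ _ w2].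
have sS1' := sS1; case: sS1' => sV1 sUV1 sV1W _ _.
have sS2' := sS2; case: sS2' => sV2 sUV2 sV2W _ _.
apply/negP => n12.
have sSI := SS_restr (SS_cap sS1 sS2) sV1 (capmxSl _ _) sV1W.
case: p1 => [sVU | p1]; first by move: n12; rewrite (submx_trans sVU sUV2).
have nI : ~~ (V1 <= V1 :&: V2)%MS by rewrite sub_capmx submx_refl /=; apply/negP.
have := p1 _ sSI nI.
have [_ e] := GS_iso2 sV2 sV1.
rewrite capmxC e addsmxC.
have := w2 _ (SS_sum sU sW sS2 sS1).
by move=> h1 h2; move: (lt_le_trans h2 h1); rewrite ltxx.
Qed.

End Layer.
Section Transfer.
Variables (F : fieldType) (A : falgType F) (G : mclass A).
Hypothesis tG : torsion_class G.
Variables (R : realType) (theta : rmodule A -> R).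
Hypothesis aT : additive_fun theta.
Variable M : rmodule A.
Hypothesis rM : is_rmod M.
Local Notation n := (mdim M).
Local Notation sm := (is_submod M).
Variables (U W : 'M[F]_n) (N : rmodule A) (g : 'M[F]_(mdim N, n)).
Hypotheses (sU : sm U) (sW : sm W) (sUW : (U <= W)%MS) (c : crit U W N g).

Lemma SS_sm V : SS G U W V -> sm V.
Proof. by case. Qed.

Lemma c_le (Y : 'M[F]_(mdim N)) : (Y *m g + U <= W)%MS.
Proof. by case: c => c1 _ _ _; rewrite addsmx_sub sUW andbT (submx_trans (submxMl _ _) c1). Qed.

Lemma sub_facts (Y : 'M[F]_(mdim N)) : is_submod N Y ->
  [/\ sm (Y *m g + U)%MS, (G (submod N Y) <-> GS G U (Y *m g + U)%MS),
   theta (submod N Y) = TS theta U (Y *m g + U)%MS,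
   (G (quotmod N Y) <-> GS G (Y *m g + U)%MS W) &
   theta (quotmod N Y) = TS theta (Y *m g + U)%MS W].
Proof.
move=> sY; have sV := crit_img_submod c sU sY.
have le1 : (U <= Y *m g + U)%MS by apply: addsmxSr.
have c1 := crit_sub c sY; have c2 := crit_quot c sY.
split => //.
- exact (T_G tG aT rM sU sV le1 c1).
- exact (T_theta tG aT rM sU sV le1 c1).
- exact (T_G tG aT rM sV sW (c_le Y) c2).
- exact (T_theta tG aT rM sV sW (c_le Y) c2).
Qed.

Lemma T_strict1 (Y : 'M[F]_(mdim N)) : strict_subobj G N Y -> SS G U W (Y *m g + U)%MS.
Proof.
move=> [[sY gY] st].
have [sV gS _ _ _] := sub_facts sY.
split => //; first exact: addsmxSr; first exact: c_le; first exact/gS.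
move=> B sB sUB sBW hB.
have [Z [sZ eZ]] := find_Y tG aT rM sU sB sUB sBW c.
have [_ gZ _ _ _] := sub_facts sZ.
have gZ' : G (submod N Z).
  apply/gZ; apply: (GS_eqr tG aT rM sU sB (crit_img_submod c sU sZ) sUB _ hB).
  by rewrite andbC.
have gYZ := st Z (conj sZ gZ').
have sYZ := submod_cap sY sZ.
have [_ g2 _ _ _] := sub_facts sYZ.
have e : ((Y :&: Z) *m g + U :=: (Y *m g + U) :&: B)%MS.
  apply: eqmx_trans (eqmxP (crit_cap _ _ c)) _.
  by apply: cap_eqmx; [apply: eqmx_refl | apply/eqmxP].
have sVB := sm_cap tG aT rM sV sB.
apply: (GS_eqr tG aT rM sU (crit_img_submod c sU sYZ) sVB (addsmxSr _ _) _ (g2.1 gYZ)).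
exact/eqmxP.
Qed.

Lemma T_strict2 (V : 'M[F]_n) (Y : 'M[F]_(mdim N)) :
  SS G U W V -> (Y *m g + U == V)%MS -> strict_subobj G N Y.
Proof.
move=> [sV sUV sVW hV st] eY.
have h1 : (Y *m g <= V)%MS by move: eY => /andP [] ; rewrite addsmx_sub => /andP [].
have h2 : (V <= Y *m g + U)%MS by move: eY => /andP [].
have sY := crit_preimg_submod c sU sV h1 h2.
have [sV' gS _ _ _] := sub_facts sY.
split.
  split => //; apply/gS.
  apply: (GS_eqr tG aT rM sU sV sV' sUV _ hV); by rewrite andbC.
move=> B' [sB' gB'].
have [sB gB _ _ _] := sub_facts sB'.
have hB := gB.1 gB'.
have := st _ sB (addsmxSr _ _) (c_le B') hB.
have sYB := submod_cap sY sB'.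
have [sYB' gYB _ _ _] := sub_facts sYB.
move=> h; apply/gYB.
have sVB := sm_cap tG aT rM sV sB.
have le : (U <= V :&: (B' *m g + U))%MS by rewrite sub_capmx sUV addsmxSr.
apply: (GS_eqr tG aT rM sU sVB sYB' le _ h).
apply/eqmxP; apply: eqmx_sym.
apply: eqmx_trans (eqmxP (crit_cap _ _ c)) _.
by apply: cap_eqmx; [apply/eqmxP | apply: eqmx_refl].
Qed.

Lemma T_strict_ex (V : 'M[F]_n) : SS G U W V ->
  exists Y : 'M[F]_(mdim N), strict_subobj G N Y /\ (Y *m g + U == V)%MS.
Proof.
move=> sS; have sS' := sS; case: sS' => sV sUV sVW _ _.
have [Y [_ eY]] := find_Y tG aT rM sU sV sUV sVW c.
by exists Y; split => //; apply: T_strict2 sS eY.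
Qed.

Lemma T_Pbar : Pbar G theta N <-> PbarS G theta U W.
Proof.
split.
  move=> [gN h]; split; first exact/(T_G tG aT rM sU sW sUW c).
  move=> V sSV; have [Y [st eY]] := T_strict_ex sSV.
  have sY := st.1.1; have [sV' _ _ _ tq] := sub_facts sY.
  have := h Y st; rewrite tq.
  by rewrite (TS_eql tG aT rM sV' (SS_sm sSV) sW (c_le Y) eY).
move=> [gS h]; split; first exact/(T_G tG aT rM sU sW sUW c).
move=> Y st; have sY := st.1.1; have [sV' _ _ _ tq] := sub_facts sY.
by rewrite tq; apply: h; apply: T_strict1.
Qed.

Lemma T_P : Ptheta G theta N <-> PS G theta U W.
Proof.
split.
  move=> [gN h]; split; first exact/(T_G tG aT rM sU sW sUW c).
  case: h => [e | h]; first by left; rewrite -(crit_dim0 c) e.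
  right => V sSV nWV; have [Y [st eY]] := T_strict_ex sSV.
  have sY := st.1.1; have [sV' _ _ _ tq] := sub_facts sY.
  have nd : mdim (quotmod N Y) != 0%N.
    rewrite (crit_dim0 (crit_quot c sY)); apply: contra nWV => h1.
    by apply: submx_trans h1 _; move: eY => /andP [].
  have := h Y st nd; rewrite tq.
  by rewrite (TS_eql tG aT rM sV' (SS_sm sSV) sW (c_le Y) eY).
move=> [gS h]; split; first exact/(T_G tG aT rM sU sW sUW c).
case: h => [e | h]; first by left; apply/eqP; rewrite (crit_dim0 c).
right => Y st nd; have sY := st.1.1; have [sV' _ _ _ tq] := sub_facts sY.
rewrite tq; apply: h; first exact: T_strict1.
by rewrite -(crit_dim0 (crit_quot c sY)).
Qed.

Lemma T_W : Wtheta G theta N <-> WS G theta U W.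
Proof.
have tN := T_theta tG aT rM sU sW sUW c.
split.
  move=> [gN t0 h]; split; first exact/(T_G tG aT rM sU sW sUW c).
    by rewrite -tN.
  move=> V sSV; have [Y [st eY]] := T_strict_ex sSV.
  have sY := st.1.1; have [sV' _ ts _ _] := sub_facts sY.
  have := h Y st; rewrite ts.
  by rewrite (TS_eqr tG aT rM sU sV' (SS_sm sSV) (addsmxSr _ _) eY).
move=> [gS t0 h]; split; first exact/(T_G tG aT rM sU sW sUW c).
  by rewrite tN.
move=> Y st; have sY := st.1.1; have [sV' _ ts _ _] := sub_facts sY.
by rewrite ts; apply: h; apply: T_strict1.
Qed.

End Transfer.

Section Extra.
Variables (F : fieldType) (A : falgType F).

Lemma eqY (M : rmodule A) m (X : 'M[F]_(m, mdim M)) : (X *m 1%:M + (0 : 'M[F]_(mdim M)) :=: X)%MS.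
Proof. by rewrite mulmx1; apply: (@addsmx0 _ _ (mdim M) _ _). Qed.

Lemma crit_im (X M : rmodule A) (f : 'M[F]_(mdim X, mdim M)) :
  is_hom X M f ->
  crit (M := M) 0 (<<f>>%MS) (quotmod X (kermx f)) (val_factmod 1%:M *m f).
Proof.
move=> hf.
have E : 1%:M *m f = val_factmod (in_factmod (kermx f) 1%:M) *m f.
  rewrite -{1}(add_sub_fact_mod (kermx f) 1%:M) mulmxDl.
  have -> : val_submod (in_submod (kermx f) 1%:M) *m f = 0.
    by apply/eqP; rewrite -sub_kermx val_submodP.
  by rewrite add0r.
have hf2 : (f <= val_factmod (U := kermx f) 1%:M *m f)%MS.
  have := submxMl (in_factmod (kermx f) 1%:M) (val_factmod (U := kermx f) 1%:M *m f).
  by rewrite mulmxA -val_factmodE -E mul1mx.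
split.
- by rewrite genmxE submxMl.
- by rewrite genmxE; apply: submx_trans hf2 (addsmxSl _ _).
- move=> m x; rewrite submx0 mulmxA => /eqP e.
  have h1 : (x *m val_factmod 1%:M <= kermx f)%MS by rewrite sub_kermx e.
  have : (x *m val_factmod 1%:M <= kermx f :&: (kermx f)^C)%MS.
    by rewrite sub_capmx h1 -val_factmodE val_factmodP.
  rewrite capmx_compl submx0 -val_factmodE val_factmod_eq0; by move/eqP.
- move=> a; apply: eqmodE; rewrite /= mulmxA -val_factmodE.
  set Z := val_factmod 1%:M *m mact X a.
  have E2 := add_sub_fact_mod (kermx f) Z.
  have -> : val_factmod (in_factmod (kermx f) Z) = Z - val_submod (in_submod (kermx f) Z).
    by rewrite -[X in X - _]E2 addrC addKr.
  rewrite mulmxBl.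
  have -> : val_submod (in_submod (kermx f) Z) *m f = 0.
    by apply/eqP; rewrite -sub_kermx val_submodP.
  by rewrite subr0 /Z -!mulmxA hf.
Qed.

Lemma crit_of_iso (M N : rmodule A) : is_iso M N -> exists g, crit (M := M) 0 1%:M N g.
Proof.
case=> f [hf rf rF].
have [B1 e1] := row_freeP rf; have [B2 e2] := row_fullP rF.
have eB : B2 = B1 by rewrite -[B2]mulmx1 -e1 mulmxA e2 mul1mx.
have e1' : f *m B2 = 1%:M by rewrite eB.
exists B2; split.
- exact: submx1.
- by apply: submx_trans (addsmxSl _ _); rewrite -e1' submxMl.
- move=> m x; rewrite submx0 => /eqP e.
  by rewrite -[x]mulmx1 -e2 mulmxA e mul0mx.
- move=> a; apply: eqmodE.
  transitivity (B2 *m f *m mact N a *m B2); first by rewrite e2 mul1mx.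
  by rewrite -(mulmxA B2 f) -hf mulmxA -mulmxA e1' mulmx1.
Qed.

End Extra.
Lemma part1 {F : fieldType} {A : falgType F} {G : mclass A} {R : realType}
  {theta : rmodule A -> R} (tG : torsion_class G) (aT : additive_fun theta)
  (M : rmodule A) :
  Pbar G theta M ->
  exists U : 'M[F]_(mdim M),
    [/\ strict_subobj G M U, Ptheta G theta (submod M U),
        Wtheta G theta (quotmod M U) &
        forall U' : 'M[F]_(mdim M),
          strict_subobj G M U' -> Ptheta G theta (submod M U') ->
          Wtheta G theta (quotmod M U') -> (U' == U)%MS].
Proof.
move=> pM; have rM := G_rmod tG aT pM.1.
have s0 := submod0 M; have s1 := submod1 M.
have le01 : ((0 : 'M[F]_(mdim M)) <= 1%:M)%MS by apply: sub0mx.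
have c0 := crit0 M.
have pS := (T_Pbar tG aT rM s0 s1 le01 c0).1 pM.
have [V0 [sS0 P0 W0]] := exist_dec tG aT rM s0 s1 le01 pS.
have [Y [st eY]] := T_strict_ex tG aT rM s0 s1 le01 c0 sS0.
have sS0' := sS0; case: sS0' => sV0 sUV0 sV0W _ _.
have sY := st.1.1.
have c1 := crit_eq (eqms_refl 0) eY (crit_sub c0 sY).
have c2 := crit_eq eY (eqms_refl 1%:M) (crit_quot c0 sY).
exists Y; split => //.
- exact ((T_P tG aT rM s0 sV0 sUV0 c1).2 P0).
- exact ((T_W tG aT rM sV0 s1 sV0W c2).2 W0).
move=> U' st' P' W'.
have sU' := st'.1.1.
have sS' := T_strict1 tG aT rM s0 s1 le01 c0 st'.
have cc1 := crit_sub c0 sU'.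
have sV' := crit_img_submod c0 s0 sU'.
have P'' := (T_P tG aT rM s0 sV' (addsmxSr _ _) cc1).1 P'.
have cc2 := crit_quot c0 sU'.
have W'' := (T_W tG aT rM sV' s1 (submx1 _) cc2).1 W'.
have l1 := uniq_le tG aT rM s0 s1 sS' P'' sS0 W0.
have l2 := uniq_le tG aT rM s0 s1 sS0 P0 sS' W''.
have e1 := eqY U'; have e2 := eqY Y.
have hU' : (U' <= V0)%MS by move: l1; rewrite e1.
have hV0 : (V0 <= U')%MS by move: l2; rewrite e1.
have hY : (Y :=: V0)%MS by apply: eqmx_trans (eqmx_sym e2) _; apply/eqmxP.
by apply/andP; split; rewrite hY.
Qed.

Theorem mainTheorem16 (F : fieldType) (A : falgType F) (G : mclass A)
    (R : realType) (theta : rmodule A -> R) :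
  torsion_class G -> additive_fun theta ->
  [/\ (forall M, Pbar G theta M ->
        exists U : 'M[F]_(mdim M),
          [/\ strict_subobj G M U, Ptheta G theta (submod M U),
              Wtheta G theta (quotmod M U) &
              forall U' : 'M[F]_(mdim M),
                strict_subobj G M U' -> Ptheta G theta (submod M U') ->
                Wtheta G theta (quotmod M U') -> (U' == U)%MS]),
      (forall M, perp G (Ptheta G theta) M /\ Pbar G theta M <-> Wtheta G theta M),
      pseudo_torsion G (Pbar G theta),
      (forall M, Ptheta G theta M \/ Wtheta G theta M -> Pbar G theta M) &
      (forall Q : mclass A, pseudo_torsion G Q ->
        (forall M, Ptheta G theta M \/ Wtheta G theta M -> Q M) ->
        forall M, Pbar G theta M -> Q M)].
Proof.
move=> tG aT.
have P1 := part1 tG aT.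
split.
- exact: P1.
- move=> M.
  have s0 := submod0 M; have s1 := submod1 M.
  have le01 : ((0 : 'M[F]_(mdim M)) <= 1%:M)%MS by apply: sub0mx.
  have c0 := crit0 M.
  split.
  + move=> [[gM pp] pM]; have rM := G_rmod tG aT gM.
    have [U0 [st P0 W0 _]] := P1 M pM.
    have sU0 := st.1.1.
    pose f := val_submod (U := U0) (1%:M : 'M[F]_(\rank U0)).
    have ef : f = row_base U0 by rewrite /f /val_submod /= mul1mx.
    have kf : kermx f = 0 by apply/eqP; rewrite kermx_eq0 ef row_base_free.
    have cS := crit_sub c0 sU0.
    have sV := crit_img_submod c0 s0 sU0.
    have le : ((0 : 'M[F]_(mdim M)) <= U0 *m 1%:M + (0 : 'M[F]_(mdim M)))%MS by apply: sub0mx.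
    have stK : strict_subobj G (submod M U0) (kermx f).
      apply: (T_strict2 tG aT rM s0 sV le cS (SS_bot tG aT rM s0 sV le)).
      by rewrite kf mul0mx addsmx_sub !sub0mx.
    have sSV := T_strict1 tG aT rM s0 s1 le01 c0 st.
    have stI : strict_subobj G M (<<f>>%MS).
      apply: (T_strict2 tG aT rM s0 s1 le01 c0 sSV).
      apply/eqmxP; apply: eqmx_trans (eqY _) _; apply: eqmx_trans (genmxE _) _.
      apply: eqmx_trans (val_submod1 _) _; exact: eqmx_sym (eqY _).
    have hom : is_hom (submod M U0) M f by move=> a; apply: submod_hom.
    have smf : strict_morph G (submod M U0) M f by split => //; exact: st.1.2.
    have f0 : f = 0 := pp (submod M U0) f P0 smf.
    have U00 : (U0 <= (0 : 'M[F]_(mdim M)))%MS.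
      have h : (f <= (0 : 'M[F]_(mdim M)))%MS by rewrite f0 sub0mx.
      by move: h; rewrite /f val_submod1.
    have e : (U0 *m 1%:M + (0 : 'M[F]_(mdim M)) == (0 : 'M[F]_(mdim M)))%MS.
      by rewrite addsmx_sub mulmx1 U00 !sub0mx.
    have c2 := crit_eq e (eqms_refl 1%:M) (crit_quot c0 sU0).
    have WS01 := (T_W tG aT rM s0 s1 le01 c2).1 W0.
    exact ((T_W tG aT rM s0 s1 le01 c0).2 WS01).
  + move=> wM; case: (wM) => gM _ _; have rM := G_rmod tG aT gM.
    have WS01 := (T_W tG aT rM s0 s1 le01 c0).1 wM.
    split; last exact ((T_Pbar tG aT rM s0 s1 le01 c0).2 (WS_Pbar tG aT rM s0 s1 WS01)).
    split => // X f pX sm.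
    case: sm => gX _ hf stK stI.
    have sI := stI.1.1.
    have cN := crit_im hf.
    have le0I : ((0 : 'M[F]_(mdim M)) <= <<f>>)%MS by apply: sub0mx.
    have tN := T_theta tG aT rM s0 sI le0I cN.
    have sSI := T_strict1 tG aT rM s0 s1 le01 c0 stI.
    case: WS01 => _ _ w; have t1 := w _ sSI.
    have sI' := crit_img_submod c0 s0 sI.
    have eI : (<<f>>%MS *m 1%:M + (0 : 'M[F]_(mdim M)) == <<f>>%MS)%MS.
      by apply/eqmxP; apply: eqY.
    rewrite (TS_eqr tG aT rM s0 sI' sI (sub0mx _ _) eI) in t1.
    case: pX => _ [e0 | hP].
      apply/eqP; rewrite -mxrank_eq0 -leqn0 -e0; exact: rank_leq_row.
    have [d0 | nd] := boolP (mdim (quotmod X (kermx f)) == 0%N).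
      by move: d0; rewrite (crit_dim0 cN) genmxE submx0 => /eqP.
    have := hP _ stK nd; rewrite tN => t2.
    by move: (lt_le_trans t2 t1); rewrite ltxx.
- split.
  + exists (zeromod A); split; first by case: tG.
    move=> U st; rewrite (theta_dim0 tG aT) //; apply/eqP; rewrite -leqn0; exact: rank_leq_col.
  + by move=> M [].
  + move=> M N pM iso; have rM := G_rmod tG aT pM.1.
    have [g cN] := crit_of_iso iso.
    have s0 := submod0 M; have s1 := submod1 M.
    have le01 : ((0 : 'M[F]_(mdim M)) <= 1%:M)%MS by apply: sub0mx.
    have pS := (T_Pbar tG aT rM s0 s1 le01 (crit0 M)).1 pM.
    exact ((T_Pbar tG aT rM s0 s1 le01 cN).2 pS).
  + move=> M U pM st; have rM := G_rmod tG aT pM.1.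
    have s0 := submod0 M; have s1 := submod1 M.
    have le01 : ((0 : 'M[F]_(mdim M)) <= 1%:M)%MS by apply: sub0mx.
    have c0 := crit0 M; have sU := st.1.1.
    have sSV := T_strict1 tG aT rM s0 s1 le01 c0 st.
    have pS := (T_Pbar tG aT rM s0 s1 le01 c0).1 pM.
    have pV := Pbar_quot tG aT rM s0 s1 pS sSV.
    have cQ := crit_quot c0 sU.
    have sV := crit_img_submod c0 s0 sU.
    exact ((T_Pbar tG aT rM sV s1 (submx1 _) cQ).2 pV).
  + move=> M U gM st pS pQ; have rM := G_rmod tG aT gM.
    have s0 := submod0 M; have s1 := submod1 M.
    have le01 : ((0 : 'M[F]_(mdim M)) <= 1%:M)%MS by apply: sub0mx.
    have c0 := crit0 M; have sU := st.1.1.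
    have sSV := T_strict1 tG aT rM s0 s1 le01 c0 st.
    have sV := crit_img_submod c0 s0 sU.
    have cS := crit_sub c0 sU; have cQ := crit_quot c0 sU.
    have pSV := (T_Pbar tG aT rM s0 sV (addsmxSr _ _) cS).1 pS.
    have pQV := (T_Pbar tG aT rM sV s1 (submx1 _) cQ).1 pQ.
    have gS := (T_G tG aT rM s0 s1 le01 c0).1 gM.
    have pS01 := Pbar_ext tG aT rM s0 s1 gS sSV pSV pQV.
    exact ((T_Pbar tG aT rM s0 s1 le01 c0).2 pS01).
- move=> M hM.
  have s0 := submod0 M; have s1 := submod1 M.
  have le01 : ((0 : 'M[F]_(mdim M)) <= 1%:M)%MS by apply: sub0mx.
  have c0 := crit0 M.
  case: hM => [pM | wM].
    have rM := G_rmod tG aT pM.1.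
    have PS01 := (T_P tG aT rM s0 s1 le01 c0).1 pM.
    exact ((T_Pbar tG aT rM s0 s1 le01 c0).2 (PS_Pbar tG aT rM s0 s1 PS01)).
  case: (wM) => gM _ _; have rM := G_rmod tG aT gM.
  have WS01 := (T_W tG aT rM s0 s1 le01 c0).1 wM.
  exact ((T_Pbar tG aT rM s0 s1 le01 c0).2 (WS_Pbar tG aT rM s0 s1 WS01)).
- move=> Q [_ _ _ _ qext] hQ M pM.
  have [U [st P W _]] := P1 M pM.
  apply: (qext M U pM.1 st); apply: hQ; [left | right] => //.
Qed.
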